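(* Let $F_2$ be the free group on generators $a,b$, let $H\leq F_2$ be a subgroup of finite index that contains an element of odd length, and let $y\in F_2$. Then there exist constants $a_{i,xH}$ (for $i\geq 1$, $xH\in F_2/H$) and an $N\in\mathbb{N}$ such that \[ |yH\cap S_n| = \sum_{i=1}^{N}\sum_{xH\in F_2/H}a_{i,xH}\cdot |xH\cap S_{n-i}| \] for all $n\geq N+1$.
   Context: Let $\Xi=\{a,b,a^{-1},b^{-1}\}$. An element $g\in F_2$ has length $n$ if $g=x_1x_2\cdots x_n$ with $x_i\in\Xi$ and $x_{i+1}\neq x_i^{-1}$ for each $i$ (reduced form); the identity has length $0$. For $n\geq 0$, $S_n\subseteq F_2$ denotes the set of elements of length $n$. The constants $a_{i,xH}$ and $N$ do not depend on $n$. *)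

(* Defs.v *)
(* The free group F_2 on a, b is modelled by reduced words. *)
From mathcomp Require Import all_boot all_order all_algebra.
Set Implicit Arguments. Unset Strict Implicit. Unset Printing Implicit Defensive.

(* A letter of Xi = {a, b, a^-1, b^-1}: (is_b, is_inverse). *)
Definition letter := (bool * bool)%type.
Definition linv (x : letter) : letter := (x.1, ~~ x.2).

Definition word := seq letter.

Definition reduced (w : word) : bool := sorted (fun x y => y != linv x) w.

Definition red_cons (x : letter) (w : word) : word :=
  if w is y :: w' then (if y == linv x then w' else x :: w) else [:: x].

Definition wmul (u v : word) : word := foldr red_cons v u.
Definition winv (w : word) : word := rev (map linv w).

Definition is_subgroup (H : pred word) : Prop :=
  (forall w, H w -> reduced w) /\ H [::] /\
  (forall u v, H u -> H v -> H (wmul u v)) /\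
  (forall u, H u -> H (winv u)).

Definition in_coset (H : pred word) (x w : word) : bool :=
  reduced w && H (wmul (winv x) w).

Definition coset_reps (H : pred word) (reps : seq word) : Prop :=
  (forall r, r \in reps -> reduced r) /\
  (forall g, reduced g -> exists2 r, r \in reps & in_coset H r g) /\
  (forall r1 r2, r1 \in reps -> r2 \in reps -> in_coset H r1 r2 -> r1 = r2).

Definition finite_index (H : pred word) : Prop :=
  exists reps, coset_reps H reps.

Definition sphere (n : nat) : seq word :=
  [seq w <- [seq val t | t <- enum {: n.-tuple letter}] | reduced w].

Definition coset_sphere_card (H : pred word) (x : word) (n : nat) : nat :=
  count (in_coset H x) (sphere n).

(* Main.v *)
Require Import Defs.
From mathcomp Require Import all_boot all_order all_algebra.
From mathcomp Require Import zify.
Import GRing.Theory Num.Theory.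
Local Open Scope ring_scope.
Lemma hx n (A : 'M[rat]_n.+1) (p : {poly rat}) : horner_mx A p = \sum_(i < size p) p`_i *: A ^+ i.
Proof.
rewrite -{1}[p]coefK poly_def linear_sum; apply: eq_bigr => i _.
by rewrite linearZ /= rmorphXn /= horner_mx_X.
Qed.

Lemma mx_rec n (A : 'M[rat]_n) (u : 'rV_n) (v0 : 'cV_n) :
  exists c : nat -> rat, forall k,
    (u *m A^+(k + n) *m v0) 0 0 = \sum_(i < n) c i * (u *m A^+(k+i) *m v0) 0 0.
Proof.
case: n A u v0 => [|n] A u v0.
  by exists (fun _ => 0) => k; rewrite big_ord0 !mxE big_ord0.
exists (fun i => - (char_poly A)`_i) => k.
have CH := Cayley_Hamilton A.
rewrite hx size_char_poly in CH.
have E : \sum_(i < n.+2) (char_poly A)`_i * (u *m A^+(k+i) *m v0) 0 0 = 0.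
  have -> : \sum_(i < n.+2) (char_poly A)`_i * (u *m A^+(k+i) *m v0) 0 0
     = (u *m (A^+k *m \sum_(i < n.+2) (char_poly A)`_i *: A ^+ i) *m v0) 0 0.
    rewrite mulmx_sumr mulmx_sumr mulmx_suml summxE; apply: eq_bigr => i _.
    by rewrite -scalemxAr -scalemxAr -scalemxAl exprD mulmxE [in RHS]mxE.
  by rewrite (_ : \sum_(i < n.+2) _ = 0) ?mulmx0 ?mul0mx ?mxE //; exact: CH.
rewrite big_ord_recr /= in E.
have L : (char_poly A)`_n.+1 = 1.
  by have /monicP := char_poly_monic A; rewrite lead_coefE size_char_poly.
rewrite L mul1r in E.
move/eqP: E; rewrite addrC addr_eq0 => /eqP ->.
rewrite -sumrN; apply: eq_bigr => i _; by rewrite mulNr.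
Qed.

Lemma fin_rec (V : finType) (v : nat -> V -> rat) (M : V -> V -> rat) (u : V -> rat) (w : nat -> rat) :
 (forall n i, v n.+1 i = \sum_j M i j * v n j) ->
 (forall n, w n.+1 = \sum_i u i * v n i) ->
 exists (c : nat -> rat) (N : nat), forall m, (N < m)%N ->
   w m = \sum_(1 <= j < N.+1) c j * w (m - j)%N.
Proof.
move=> hv hw.
pose A : 'M[rat]_#|V| := \matrix_(a, b) M (enum_val a) (enum_val b).
pose uu : 'rV[rat]_#|V| := \row_a u (enum_val a).
pose vec n : 'cV[rat]_#|V| := \col_a v n (enum_val a).
have RE : forall F : V -> rat, \sum_j F j = \sum_(a < #|V|) F (enum_val a).
  move=> F; rewrite (reindex (@enum_val _ (pred_of_simpl predT))) //.
  by apply: onW_bij; exact: enum_val_bij.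
have Hvec : forall n, vec n = A ^+ n *m vec 0%N.
  elim=> [|n IH]; first by rewrite expr0 mul1mx.
  rewrite exprS -mulmxE -mulmxA -IH.
  apply/matrixP => a b; rewrite !mxE hv RE; apply: eq_bigr => c _.
  by rewrite !mxE.
have Hw : forall n, w n.+1 = (uu *m A ^+ n *m vec 0%N) 0 0.
  move=> n; rewrite -mulmxA -Hvec hw RE mxE; apply: eq_bigr => c _.
  by rewrite !mxE.
have [c Hc] := @mx_rec _ A uu (vec 0%N).
exists (fun j => c (#|V| - j)%N), #|V| => m hm.
have -> : m = (m - #|V|.+1 + #|V|).+1 by lia.
rewrite Hw Hc big_add1 /= big_mkord.
rewrite (reindex_inj rev_ord_inj) /=; apply: eq_bigr => i _.
have -> : ((m - #|V|.+1 + #|V|).+1 - i.+1)%N = (m - #|V|.+1 + (#|V| - i.+1)).+1.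
  have hi : (nat_of_ord i < #|V|)%N by exact: ltn_ord i.
  move: hi hm; generalize (nat_of_ord i) #|V| => x y. lia.
by rewrite Hw.
Qed.

Local Open Scope nat_scope.

Lemma linvK x : linv (linv x) = x.
Proof. by case: x => a b; rewrite /linv /= negbK. Qed.

Lemma red_cons_reduced x z : reduced z -> reduced (red_cons x z).
Proof.
case: z => [|y z] //= hz.
case: ifP => [_|hy]; first exact: path_sorted hz.
by rewrite /reduced /= hy.
Qed.

Lemma wmul_reduced u z : reduced z -> reduced (wmul u z).
Proof. by move=> hz; elim: u => //= x u IH; exact: red_cons_reduced. Qed.

Lemma red_cons_cancel x z : reduced z -> red_cons x (red_cons (linv x) z) = z.
Proof.
case: z => [|y z] /=; first by rewrite eqxx.
rewrite linvK; case: (eqVneq y x) => [->|hyx] hz.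
  case: z hz => [|y' z] //=; rewrite /reduced /= => /andP[h _].
  by rewrite (negbTE h).
by rewrite /= eqxx.
Qed.

Lemma wmul_red_cons x w z : reduced z -> wmul (red_cons x w) z = red_cons x (wmul w z).
Proof.
move=> hz; case: w => [|y w] //=.
case: ifP => //= /eqP ->.
by rewrite red_cons_cancel // wmul_reduced.
Qed.

Lemma wmulA u v z : reduced z -> wmul (wmul u v) z = wmul u (wmul v z).
Proof.
move=> hz; elim: u => //= x u IH.
by rewrite wmul_red_cons // IH.
Qed.

Lemma winvK u : winv (winv u) = u.
Proof. by rewrite /winv map_rev revK -map_comp map_id_in // => x _; rewrite /= linvK. Qed.

Lemma wmul_cat s1 s2 z : wmul (s1 ++ s2) z = wmul s1 (wmul s2 z).
Proof. exact: foldr_cat. Qed.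

Lemma winv_cons x u : winv (x :: u) = winv u ++ [:: linv x].
Proof. by rewrite /winv /= rev_cons cats1. Qed.

Lemma wmulVK u z : reduced z -> wmul (winv u) (wmul u z) = z.
Proof.
move=> hz; elim: u => //= x u IH.
rewrite winv_cons wmul_cat /=.
by rewrite -{2}(linvK x) red_cons_cancel ?wmul_reduced.
Qed.

Lemma wmulKV u z : reduced z -> wmul u (wmul (winv u) z) = z.
Proof. by move=> hz; rewrite -{1}(winvK u) wmulVK. Qed.

Lemma wmul_nil z : wmul [::] z = z.
Proof. by []. Qed.

Section Cos.
Variable H : pred word.
Hypothesis hH : is_subgroup H.

Lemma same_coset r z : reduced z -> H (wmul (winv r) z) ->
  forall t, reduced t -> H (wmul (winv r) t) = H (wmul (winv z) t).
Proof.
case: hH => _ [_ [hM hI]] hz ha t ht.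
set a := wmul (winv r) z in ha.
set q := wmul (winv z) t.
have hq : reduced q by exact: wmul_reduced.
have E : wmul a q = wmul (winv r) t by rewrite /a wmulA // wmulKV.
apply/idP/idP => h.
  by rewrite -(@wmulVK a q hq) E; apply: hM => //; apply: hI.
by rewrite -E; apply: hM.
Qed.

Lemma norm_eq x t : reduced t ->
  wmul (winv x) t = wmul (winv (wmul x [::])) t.
Proof.
move=> ht.
transitivity (wmul (winv (wmul x [::])) (wmul (wmul x [::]) (wmul (winv x) t))).
  by rewrite wmulVK // wmul_reduced.
by rewrite wmulA ?wmul_reduced // wmul_nil wmulKV.
Qed.

End Cos.

Lemma cons_red l t : reduced (l :: t) -> red_cons l t = l :: t.
Proof. by case: t => [|y t] //=; rewrite /reduced /= => /andP[h _]; rewrite (negbTE h). Qed.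

Lemma core x l t : reduced (l :: t) -> wmul (winv x) (l :: t) = wmul (winv (linv l :: x)) t.
Proof. by move=> h; rewrite winv_cons linvK wmul_cat /= cons_red. Qed.

Lemma count_sphere P n : count P (sphere n) = \sum_(t : n.-tuple letter) (reduced t && P t : nat).
Proof.
rewrite /sphere count_filter count_map -sum1_count big_mkcond big_enum /=.
by apply: eq_bigr => t _; rewrite /preim /= andbC; case: (_ && _).
Qed.

Lemma split_tuple n (F : seq letter -> nat) :
  \sum_(t : n.+1.-tuple letter) F t = \sum_(x : letter) \sum_(t : n.-tuple letter) F (x :: t).
Proof.
rewrite pair_bigA /=.
rewrite (reindex (fun p : letter * n.-tuple letter => [tuple of p.1 :: p.2])) //=.
apply: onW_bij; exists (fun t : n.+1.-tuple letter => (thead t, [tuple of behead t])).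
  by case=> x t /=; congr pair; apply: val_inj.
by move=> t; rewrite [RHS]tuple_eta; apply: val_inj.
Qed.

Definition G (H : pred word) x p n :=
  \sum_(t : n.-tuple letter) (reduced (p :: t) && H (wmul (winv x) t) : nat).

Lemma G_step H x p n : G H x p n.+1 = \sum_(l : letter) (l != linv p) * G H (linv l :: x) l n.
Proof.
rewrite /G (split_tuple _ (fun w : seq letter => (reduced (p :: w) && H (wmul (winv x) w) : nat))); apply: eq_bigr => l _; rewrite big_distrr /=; apply: eq_bigr => t _.
case: (l != linv p) => //=; rewrite mul1n; case R: (path _ l (val t)) => //=.
by rewrite core.
Qed.

Lemma s_step H y n : coset_sphere_card H y n.+1 = \sum_l G H (linv l :: y) l n.
Proof.
rewrite /coset_sphere_card count_sphere (split_tuple _ (fun w : seq letter => (reduced w && in_coset H y w : nat))); apply: eq_bigr => l _.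
apply: eq_bigr => t _; rewrite /in_coset.
by case R: (reduced (l :: t)) => //=; rewrite core.
Qed.

Lemma G_eq H x r p n : (forall t, reduced t -> H (wmul (winv x) t) = H (wmul (winv r) t)) ->
  G H x p n = G H r p n.
Proof.
move=> e; apply: eq_bigr => t _; case R: (reduced (p :: t)) => //=.
by rewrite e //; exact: path_sorted R.
Qed.

Definition ri (H : pred word) (reps : seq word) (x : word) : 'I_(size reps).+1 :=
  inord (find (fun r => in_coset H r (wmul x [::])) reps).

Lemma ri_spec H reps : is_subgroup H -> coset_reps H reps ->
  forall x t, reduced t -> H (wmul (winv x) t) = H (wmul (winv (nth [::] reps (ri H reps x))) t).
Proof.
move=> hH [_ [hc _]] x t ht.
have hz : reduced (wmul x [::]) by exact: wmul_reduced.
have [r rin hr] := hc _ hz.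
have hh : has (fun r => in_coset H r (wmul x [::])) reps by apply/hasP; exists r.
rewrite /ri inordK; last by apply: (leq_trans _ (leqnSn _)); rewrite -has_find.
have /andP[_ hn] := nth_find [::] hh.
by rewrite (@same_coset H hH _ _ hz hn _ ht) norm_eq.
Qed.

Lemma sum_ind (I : finType) (j0 : I) (b : bool) (g : I -> rat) :
  (\sum_j (b && (j == j0))%:R * g j = b%:R * g j0)%R.
Proof.
rewrite (bigD1 j0) //= eqxx andbT big1 ?addr0 // => j /negbTE ->.
by rewrite andbF mul0r.
Qed.

Local Open Scope ring_scope.

Lemma sum_ind1 (I : finType) (j0 : I) (g : I -> rat) :
  \sum_j (j == j0)%:R * g j = g j0.
Proof. by rewrite -[RHS]mul1r -(@sum_ind I j0 true g). Qed.

Lemma big_if_count (s : seq word) (r0 : word) (K : rat) :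
  \sum_(r <- s) (if r == r0 then K else 0) = (count_mem r0 s)%:R * K.
Proof.
elim: s => [|r s IH]; first by rewrite big_nil mul0r.
rewrite big_cons IH /= natrD mulrDl; case: (r == r0); by rewrite ?mul1r ?mul0r.
Qed.

Theorem theorem1p2 (H : pred word) (hH : is_subgroup H) (hfin : finite_index H)
  (hodd : exists2 h, H h & odd (size h)) (y : word) (hy : reduced y)
  (reps : seq word) (hreps : coset_reps H reps) :
  exists (a : nat -> word -> rat) (N : nat),
    forall n : nat, (N.+1 <= n)%N ->
      (coset_sphere_card H y n)%:R =
        \sum_(1 <= i < N.+1) \sum_(r <- reps) a i r * (coset_sphere_card H r (n - i))%:R.
Proof.
pose rr (i : 'I_(size reps).+1) := nth [::] reps i.
pose V := (letter * 'I_(size reps).+1)%type.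
pose v n (q : V) := ((G H (rr q.2) q.1 n)%:R : rat).
pose M (q q' : V) := (((q'.1 != linv q.1) && (q'.2 == ri H reps (linv q'.1 :: rr q.2)))%:R : rat).
pose u (q : V) := ((true && (q.2 == ri H reps (linv q.1 :: y)))%:R : rat).
pose w n := ((coset_sphere_card H y n)%:R : rat).
have hv : forall n q, v n.+1 q = \sum_q' M q q' * v n q'.
  move=> n [p i].
  rewrite (eq_bigr (fun q' : V => M (p,i) (q'.1, q'.2) * v n (q'.1, q'.2))); last by case.
  rewrite -(pair_bigA _ (fun a b => M (p,i) (a, b) * v n (a, b))) /=.
  rewrite /v /= G_step natr_sum; apply: eq_bigr => l _.
  rewrite /M /= sum_ind natrM.
  by rewrite (G_eq _ _ _ _ _ (@ri_spec H reps hH hreps _)).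
have hw : forall n, w n.+1 = \sum_q u q * v n q.
  move=> n.
  rewrite (eq_bigr (fun q' : V => u (q'.1, q'.2) * v n (q'.1, q'.2))); last by case.
  rewrite -(pair_bigA _ (fun a b => u (a, b) * v n (a, b))) /=.
  rewrite /w s_step natr_sum; apply: eq_bigr => l _.
  rewrite /u /= sum_ind1.
  by rewrite (G_eq _ _ _ _ _ (@ri_spec H reps hH hreps _)).
have [c [N HN]] := @fin_rec _ _ _ _ _ hv hw.
case: hreps => [_ [hc _]].
have [r0 r0in hr0] := hc _ hy.
have Ecard : forall m, coset_sphere_card H r0 m = coset_sphere_card H y m.
  move=> m; apply: eq_count => t; rewrite /in_coset.
  case R: (reduced t) => //=.
  by apply: (@same_coset H hH r0 y hy _ t R); case/andP: hr0.
pose cnt := (count_mem r0 reps)%:R : rat.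
have cnt0 : cnt != 0.
  by rewrite /cnt pnatr_eq0 -lt0n -has_count has_pred1.
exists (fun j r => if r == r0 then c j / cnt else 0), N => m hm.
move: (HN m hm); rewrite /w => ->; apply: eq_bigr => j _.
transitivity (\sum_(r <- reps) (if r == r0 then c j / cnt * (coset_sphere_card H y (m - j))%:R else 0)).
  rewrite big_if_count -/cnt [c j / cnt]mulrC mulrA mulrA divff // mul1r.
  done.
by apply: eq_bigr => r _; case: eqP => [->|_]; rewrite ?mul0r // Ecard.
Qed.
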